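(* Let $(R,\mathfrak m)$ be a Noetherian local ring, $J$ an $\mathfrak m$-primary ideal, and $I=(f_1,\dots,f_r)$ where $f_1,\dots,f_r$ is a filter-regular sequence. Let $p$ be the Hilbert perturbation index of $R/I$ with respect to $J$, and $N=\max\{p,\operatorname{ar}_J(I)+1\}$. Then $\operatorname{gr}_J(R/I)\cong\operatorname{gr}_J(R/I')$ for all ideals $I'=(f_1',\dots,f_r')$ with $f_i'-f_i\in J^N$, $i=1,\dots,r$.
   Context: A sequence is filter-regular if for each $i$, $f_i\notin\mathfrak p$ for every associated prime $\mathfrak p\ne\mathfrak m$ of $R/(f_1,\dots,f_{i-1})$. The Hilbert perturbation index of $R/I$ with respect to $J$ is the least number $p$ such that for every $f_1',\dots,f_r'$ with $f_i'\equiv f_i\bmod J^p$ and $I'=(f_1',\dots,f_r')$, one has $\ell(R/(I+J^n))=\ell(R/(I'+J^n))$ for all $n\ge0$. $\operatorname{ar}_J(I)$ is the least $c$ with $J^n\cap I=J^{n-c}(J^c\cap I)$ for all $n\ge c$. $\operatorname{gr}_J(R/I)=\bigoplus_n(J^n+I)/(J^{n+1}+I)$. *)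

(* Defs.v *)
From mathcomp Require Import all_boot all_order all_algebra.
Set Implicit Arguments. Unset Strict Implicit. Unset Printing Implicit Defensive.
Import GRing.Theory.
Local Open Scope ring_scope.

Section Ideals.
Variable R : comNzRingType.

Definition subI (A B : R -> Prop) := forall x, A x -> B x.
Definition eqI (A B : R -> Prop) := forall x, A x <-> B x.
Definition fullI : R -> Prop := fun _ => True.

Definition is_ideal (A : R -> Prop) :=
  [/\ A 0, (forall x y, A x -> A y -> A (x + y)) & (forall a x, A x -> A (a * x))].

Definition idspan (s : seq R) : R -> Prop :=
  fun x => exists c : 'I_(size s) -> R, x = \sum_(i < size s) c i * s`_i.

Definition gen (A : R -> Prop) : R -> Prop :=
  fun x => exists s : seq R, (forall i, (i < size s)%N -> A s`_i) /\ idspan s x.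

Definition sumI (A B : R -> Prop) : R -> Prop :=
  fun x => exists a b, [/\ A a, B b & x = a + b].
Definition capI (A B : R -> Prop) : R -> Prop := fun x => A x /\ B x.
Definition mulI (A B : R -> Prop) : R -> Prop :=
  gen (fun z => exists a b, [/\ A a, B b & z = a * b]).
Definition powI (J : R -> Prop) (n : nat) : R -> Prop := iter n (mulI J) fullI.

Definition proper (A : R -> Prop) := ~ A 1.
Definition maximal_ideal (M : R -> Prop) :=
  [/\ is_ideal M, proper M &
      forall B, is_ideal B -> subI M B -> proper B -> eqI B M].
Definition prime_ideal (P : R -> Prop) :=
  [/\ is_ideal P, proper P & forall x y, P (x * y) -> P x \/ P y].
Definition radical (A : R -> Prop) : R -> Prop := fun x => exists n, A (x ^+ n).

Definition noetherian := forall A, is_ideal A -> exists s, eqI A (idspan s).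
Definition local_ring (m : R -> Prop) :=
  maximal_ideal m /\ forall M, maximal_ideal M -> eqI M m.
Definition m_primary (m J : R -> Prop) := is_ideal J /\ eqI (radical J) m.

(* associated primes of R/K: primes of the form (K : x) = Ann(x mod K) *)
Definition colon (K : R -> Prop) (x : R) : R -> Prop := fun y => K (y * x).
Definition assoc_prime (K P : R -> Prop) :=
  prime_ideal P /\ exists x, eqI P (colon K x).

Definition filter_regular (m : R -> Prop) (f : seq R) :=
  forall i, (i < size f)%N -> forall P, assoc_prime (idspan (take i f)) P ->
    ~ eqI P m -> ~ P f`_i.

(* length of R/K: chains K = c_0 < c_1 < ... < c_n = R of ideals *)
Definition chain_of_length (K : R -> Prop) (n : nat) :=
  exists c : nat -> R -> Prop,
  [/\ eqI (c 0%N) K, eqI (c n) fullI &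
      forall i, (i < n)%N -> [/\ is_ideal (c i), subI (c i) (c i.+1) &
                                 exists x, c i.+1 x /\ ~ c i x]].
Definition length_is (K : R -> Prop) (n : nat) :=
  chain_of_length K n /\ forall k, chain_of_length K k -> (k <= n)%N.
(* ell(R/A) = ell(R/B) in N u {oo} *)
Definition same_length (A B : R -> Prop) :=
  forall n, length_is A n <-> length_is B n.

Definition perturbation_ok (J : R -> Prop) (f : seq R) (q : nat) :=
  forall f' : seq R, size f' = size f ->
  (forall i, (i < size f)%N -> powI J q (f'`_i - f`_i)) ->
  forall n, same_length (sumI (idspan f) (powI J n)) (sumI (idspan f') (powI J n)).
Definition hilbert_perturbation_index (J : R -> Prop) (f : seq R) (p : nat) :=
  perturbation_ok J f p /\ forall q, perturbation_ok J f q -> (p <= q)%N.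

Definition AR_ok (J I : R -> Prop) (c : nat) :=
  forall n, (c <= n)%N ->
    eqI (capI (powI J n) I) (mulI (powI J (n - c)) (capI (powI J c) I)).
Definition ar_index (J I : R -> Prop) (c : nat) :=
  AR_ok J I c /\ forall d, AR_ok J I d -> (c <= d)%N.

(* gr_J(R/A) ~= gr_J(R/B) as graded rings.  The degree-n piece of gr_J(R/A)
   is (J^n + A)/(J^{n+1} + A); phi n acts on representatives. *)
Definition gr_iso (J A B : R -> Prop) :=
  exists phi : nat -> R -> R,
  [/\ (forall n x, sumI (powI J n) A x -> sumI (powI J n) B (phi n x)),
      (forall n x y, sumI (powI J n) A x -> sumI (powI J n) A y ->
         (sumI (powI J n.+1) A (x - y) <->
          sumI (powI J n.+1) B (phi n x - phi n y))),
      (forall n z, sumI (powI J n) B z ->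
         exists x, sumI (powI J n) A x /\ sumI (powI J n.+1) B (phi n x - z)),
      (forall n x y, sumI (powI J n) A x -> sumI (powI J n) A y ->
         sumI (powI J n.+1) B (phi n (x + y) - (phi n x + phi n y))) /\
      (forall k n x y, sumI (powI J k) A x -> sumI (powI J n) A y ->
         sumI (powI J (k + n).+1) B (phi (k + n)%N (x * y) - phi k x * phi n y)) &
      sumI (powI J 1) B (phi 0%N 1 - 1)].

End Ideals.

(* Main.v *)
Require Import Defs.
From mathcomp Require Import all_boot all_order all_algebra.
From mathcomp Require Import zify ring.
From Stdlib Require Import Lia FunctionalExtensionality PropExtensionality ClassicalEpsilon Classical.
Set Implicit Arguments. Unset Strict Implicit. Unset Printing Implicit Defensive.
Import GRing.Theory.
Local Open Scope ring_scope.


Section Work.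
Variable R : comNzRingType.
Implicit Types (A B C K X Y J : R -> Prop) (s : seq R).

Lemma eqI_eq A B : eqI A B -> A = B.
Proof.
move=> h; apply: functional_extensionality => x; apply: propositional_extensionality; exact: h.
Qed.

Lemma subI_antisym A B : subI A B -> subI B A -> A = B.
Proof. by move=> h1 h2; apply: eqI_eq => x; split; [exact: h1|exact: h2]. Qed.

Lemma subI_trans A B C : subI A B -> subI B C -> subI A C.
Proof. by move=> h1 h2 x /h1 /h2. Qed.

Section IdealFacts.
Variable K : R -> Prop.
Hypothesis hK : is_ideal K.
Lemma ideal0 : K 0. Proof. by case: hK. Qed.
Lemma idealD x y : K x -> K y -> K (x + y). Proof. by case: hK => _ h _; apply: h. Qed.
Lemma idealM a x : K x -> K (a * x). Proof. by case: hK => _ _ h; apply: h. Qed.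
Lemma idealMr a x : K x -> K (x * a). Proof. by rewrite mulrC; apply: idealM. Qed.
Lemma idealN x : K x -> K (- x). Proof. by move=> h; rewrite -mulN1r; apply: idealM. Qed.
Lemma idealB x y : K x -> K y -> K (x - y). Proof. by move=> h1 h2; apply: idealD => //; apply: idealN. Qed.
Lemma idealBr x y : K (x - y) -> K y -> K x.
Proof. by move=> h1 h2; rewrite -(subrK y x); apply: idealD. Qed.
Lemma idealBl x y : K (x - y) -> K x -> K y.
Proof. by move=> h1 h2; have := idealB h2 h1; rewrite opprB addrC subrK. Qed.
End IdealFacts.
Arguments ideal0 {K}.
Arguments idealD {K} hK {x y}.
Arguments idealM {K} hK a {x}.
Arguments idealMr {K} hK a {x}.
Arguments idealN {K} hK {x}.
Arguments idealB {K} hK {x y}.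
Arguments idealBr {K} hK {x y}.
Arguments idealBl {K} hK {x y}.

Lemma full_ideal : @is_ideal R (@fullI R). Proof. by []. Qed.

Lemma idspan_ideal s : is_ideal (idspan s).
Proof.
split.
- by exists (fun _ => 0); rewrite big1 // => i _; rewrite mul0r.
- move=> x y [c ->] [d ->]; exists (fun i => c i + d i).
  by rewrite -big_split; apply: eq_bigr => i _; rewrite mulrDl.
- move=> a x [c ->]; exists (fun i => a * c i).
  by rewrite mulr_sumr; apply: eq_bigr => i _; rewrite mulrA.
Qed.

Lemma idspan_min s K : is_ideal K -> (forall i, (i < size s)%N -> K s`_i) ->
  subI (idspan s) K.
Proof.
move=> hK hs x [c ->]; apply: (big_ind K); first exact: ideal0.
- by move=> ??; apply: idealD.
- by move=> i _; exact: (idealM hK _ (hs _ (ltn_ord i))).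
Qed.

Lemma idspan_mem s i : (i < size s)%N -> idspan s s`_i.
Proof.
move=> hi; exists (fun j : 'I_(size s) => if val j == i then 1 else 0).
rewrite (bigD1 (Ordinal hi)) //= eqxx mul1r big1 ?addr0 // => j hj.
rewrite ifN ?mul0r //; apply: contra hj => /eqP e; apply/eqP; exact: val_inj.
Qed.

Inductive clos A : R -> Prop :=
| clos0 : clos A 0
| closS a y x : A y -> clos A x -> clos A (a * y + x).

Lemma clos_ideal A : is_ideal (clos A).
Proof.
split; first exact: clos0.
- move=> x y hx hy; elim: hx => [|a u v hu hv IH]; first by rewrite add0r.
  by rewrite -addrA; apply: closS.
- move=> b x hx; elim: hx => [|a u v hu hv IH]; first by rewrite mulr0; apply: clos0.
  by rewrite mulrDr mulrA; apply: closS.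
Qed.

Lemma clos_min A K : is_ideal K -> subI A K -> subI (clos A) K.
Proof.
move=> hK hA x; elim=> [|a y z hy _ IH]; first exact: ideal0.
exact: (idealD hK (idealM hK a (hA _ hy)) IH).
Qed.

Lemma clos_sub A : subI A (clos A).
Proof. by move=> y hy; rewrite -[y]addr0 -[y in y + _]mul1r; apply: closS => //; apply: clos0. Qed.

Lemma gen_clos A : gen A = clos A.
Proof.
apply: subI_antisym.
- move=> x [s [hs hx]]; apply: (idspan_min (clos_ideal A)) hx => i hi.
  by apply: clos_sub; apply: hs.
- move=> x; elim=> [|a y z hy _ [s [hs hz]]].
  + exists [::]; split => // ; exact: (ideal0 (idspan_ideal [::])).
  + exists (y :: s); split.
      by case=> [|i] //= hi; apply: hs.
    have h1 : subI (idspan s) (idspan (y :: s)).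
      apply: idspan_min; first exact: idspan_ideal.
      by move=> i hi; apply: (@idspan_mem (y :: s) i.+1).
    apply: idealD; first exact: idspan_ideal.
      by apply: idealM; [exact: idspan_ideal| exact: (@idspan_mem (y :: s) 0)].
    exact: h1.
Qed.

Lemma gen_ideal A : is_ideal (gen A). Proof. rewrite gen_clos; exact: clos_ideal. Qed.
Lemma gen_min A K : is_ideal K -> subI A K -> subI (gen A) K.
Proof. rewrite gen_clos; exact: clos_min. Qed.
Lemma gen_sub A : subI A (gen A). Proof. rewrite gen_clos; exact: clos_sub. Qed.

Lemma sumI_ideal A B : is_ideal A -> is_ideal B -> is_ideal (sumI A B).
Proof.
move=> hA hB; split.
- by exists 0, 0; split; rewrite ?addr0 //; apply: ideal0.
- move=> x y [a [b [ha hb ->]]] [a' [b' [ha' hb' ->]]].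
  exists (a + a'), (b + b'); split; [exact (idealD hA ha ha')|exact (idealD hB hb hb')|].
  by rewrite addrACA.
- move=> r x [a [b [ha hb ->]]]; exists (r * a), (r * b).
  split; [exact (idealM hA _ ha)|exact (idealM hB _ hb)|by rewrite mulrDr].
Qed.

Lemma sumI_l A B : is_ideal B -> subI A (sumI A B).
Proof. by move=> hB x hx; exists x, 0; split; rewrite ?addr0 //; apply: ideal0. Qed.
Lemma sumI_r A B : is_ideal A -> subI B (sumI A B).
Proof. by move=> hA x hx; exists 0, x; split; rewrite ?add0r //; apply: ideal0. Qed.
Lemma sumI_min A B K : is_ideal K -> subI A K -> subI B K -> subI (sumI A B) K.
Proof. by move=> hK h1 h2 x [a [b [ha hb ->]]]; apply: idealD => //; [apply: h1|apply: h2]. Qed.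
Lemma sumI_mono A B A' B' : subI A A' -> subI B B' -> subI (sumI A B) (sumI A' B').
Proof. by move=> h1 h2 x [a [b [ha hb ->]]]; exists a, b; split; [apply: h1|apply: h2|]. Qed.
Lemma sumIC A B : sumI A B = sumI B A.
Proof.
by apply: subI_antisym => x [a [b [ha hb ->]]]; exists b, a; split; rewrite // addrC.
Qed.

Lemma capI_ideal A B : is_ideal A -> is_ideal B -> is_ideal (capI A B).
Proof.
move=> hA hB; split.
- by split; apply: ideal0.
- by move=> x y [??] [??]; split; apply: idealD.
- by move=> a x [??]; split; apply: idealM.
Qed.

Lemma mulI_ideal A B : is_ideal (mulI A B). Proof. exact: gen_ideal. Qed.
Lemma mulI_gen A B a b : A a -> B b -> mulI A B (a * b).
Proof. by move=> ha hb; apply: gen_sub; exists a, b. Qed.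
Lemma mulI_min A B K : is_ideal K -> (forall a b, A a -> B b -> K (a * b)) ->
  subI (mulI A B) K.
Proof. by move=> hK h; apply: gen_min => // z [a [b [ha hb ->]]]; apply: h. Qed.
Lemma mulI_mono A B A' B' : subI A A' -> subI B B' -> subI (mulI A B) (mulI A' B').
Proof.
move=> h1 h2; apply: mulI_min; first exact: mulI_ideal.
by move=> a b ha hb; apply: mulI_gen; [apply: h1|apply: h2].
Qed.
Lemma mulI_subr A B : is_ideal B -> subI (mulI A B) B.
Proof. by move=> hB; apply: mulI_min => // a b _ hb; apply: idealM. Qed.
Lemma mulI_subl A B : is_ideal A -> subI (mulI A B) A.
Proof. by move=> hA; apply: mulI_min => // a b ha _; apply: idealMr. Qed.
Lemma mulIC A B : mulI A B = mulI B A.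
Proof.
by apply: subI_antisym; apply: mulI_min; try exact: mulI_ideal;
  move=> a b ha hb; rewrite mulrC; apply: mulI_gen.
Qed.

Lemma mulIA_sub A B C : subI (mulI (mulI A B) C) (mulI A (mulI B C)).
Proof.
pose P z := forall c, C c -> mulI A (mulI B C) (z * c).
have hP : is_ideal P.
  split.
  - by move=> c _; rewrite mul0r; apply: ideal0; apply: mulI_ideal.
  - by move=> x y hx hy c hc; rewrite mulrDl; apply: idealD; [exact: mulI_ideal| apply: hx | apply: hy].
  - by move=> a x hx c hc; rewrite -mulrA; apply: idealM; [exact: mulI_ideal| apply: hx].
have hAB : subI (mulI A B) P.
  apply: mulI_min => // a b ha hb c hc; rewrite -mulrA.
  by apply: mulI_gen => //; apply: mulI_gen.
apply: mulI_min; first exact: mulI_ideal.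
by move=> z c /hAB hz hc; apply: hz.
Qed.

Lemma mulIA A B C : mulI (mulI A B) C = mulI A (mulI B C).
Proof.
apply: subI_antisym; first exact: mulIA_sub.
have -> : mulI A (mulI B C) = mulI (mulI C B) A by rewrite mulIC (mulIC B C).
have -> : mulI (mulI A B) C = mulI C (mulI B A) by rewrite mulIC (mulIC A B).
exact: mulIA_sub.
Qed.

Lemma mulI_fullI X : is_ideal X -> mulI (@fullI R) X = X.
Proof.
move=> hX; apply: subI_antisym; first exact: mulI_subr.
by move=> x hx; rewrite -[x]mul1r; apply: mulI_gen.
Qed.

Lemma mulI_sumI A B X : is_ideal A -> is_ideal B ->
  subI (mulI (sumI A B) X) (sumI (mulI A X) (mulI B X)).
Proof.
move=> hA hB; apply: mulI_min; first by apply: sumI_ideal; exact: mulI_ideal.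
move=> y x [a [b [ha hb ->]]] hx; rewrite mulrDl.
by exists (a * x), (b * x); split => //; apply: mulI_gen.
Qed.

Lemma powI0 J : powI J 0 = @fullI R. Proof. by []. Qed.
Lemma powIS J n : powI J n.+1 = mulI J (powI J n). Proof. by []. Qed.
Lemma powI_ideal J n : is_ideal (powI J n).
Proof. by case: n => [|n]; [exact: full_ideal| exact: mulI_ideal]. Qed.
Lemma powI_add J a b : powI J (a + b) = mulI (powI J a) (powI J b).
Proof.
elim: a => [|a IH]; first by rewrite add0n powI0 mulI_fullI //; exact: powI_ideal.
by rewrite addSn !powIS IH mulIA.
Qed.
Lemma powI_anti1 J n : is_ideal J -> subI (powI J n.+1) (powI J n).
Proof. by move=> hJ; rewrite powIS; apply: mulI_subr; exact: powI_ideal. Qed.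
Lemma powI_anti J m n : is_ideal J -> (m <= n)%N -> subI (powI J n) (powI J m).
Proof.
move=> hJ; elim: n => [|n IH]; first by rewrite leqn0 => /eqP ->.
rewrite leq_eqVlt => /orP [/eqP -> //|]; rewrite ltnS => /IH h.
apply: (subI_trans _ h); exact: powI_anti1.
Qed.
Lemma powI_monoI A B n : subI A B -> subI (powI A n) (powI B n).
Proof. by move=> h; elim: n => [//|n IH]; rewrite !powIS; apply: mulI_mono. Qed.
Lemma powI1 J : is_ideal J -> powI J 1 = J.
Proof.
move=> hJ; rewrite powIS powI0 mulIC mulI_fullI //.
Qed.
Lemma powI_mul J a b x y : powI J a x -> powI J b y -> powI J (a + b) (x * y).
Proof. by move=> h1 h2; rewrite powI_add; apply: mulI_gen. Qed.

End Work.


Section Chains.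
Variable R : comNzRingType.
Implicit Types (A B C K X Y J a b d lo hi : R -> Prop) (s : seq R).

Definition chainI a b k := exists c : nat -> R -> Prop,
  [/\ c 0%N = a, c k = b, (forall i, (i <= k)%N -> is_ideal (c i)) &
      forall i, (i < k)%N -> subI (c i) (c i.+1) /\ exists x, c i.+1 x /\ ~ c i x].

Lemma chain_mono_gen (c : nat -> R -> Prop) k :
  (forall i, (i < k)%N -> subI (c i) (c i.+1)) ->
  forall i j, (i <= j <= k)%N -> subI (c i) (c j).
Proof.
move=> h i j /andP [hij hjk]; elim: j hij hjk => [|j IH].
  by rewrite leqn0 => /eqP -> _.
move=> hij hjk; move: hij; rewrite leq_eqVlt ltnS => /orP [/eqP -> //|hij].
apply: (subI_trans (IH hij (ltnW hjk))); exact: h.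
Qed.

Lemma chain_sub a b k : chainI a b k -> subI a b.
Proof.
move=> [c [<- <- _ h]]; apply: (chain_mono_gen (c:=c) (k:=k)).
  by move=> i /h [].
by rewrite leq0n leqnn.
Qed.

Lemma chain_idl a b k : chainI a b k -> is_ideal a.
Proof. by move=> [c [<- _ hi _]]; apply: hi. Qed.
Lemma chain_idr a b k : chainI a b k -> is_ideal b.
Proof. by move=> [c [_ <- hi _]]; apply: hi. Qed.

Lemma chain0 a : is_ideal a -> chainI a a 0.
Proof. by move=> ha; exists (fun _ => a); split => // i; rewrite leqn0 => /eqP ->. Qed.

Lemma chain_back a b k : chainI a b k -> subI b a -> k = 0%N.
Proof.
move=> [c [e0 ek hi h]] hba; case: k ek hi h => [//|k] ek hi h.
have [_ [x [hx1 hx0]]] := h 0%N isT.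
exfalso; apply: hx0; rewrite e0; apply: hba; rewrite -ek.
have hm : forall i, (i < k.+1)%N -> subI (c i) (c i.+1) by move=> i /h [].
have hh : (1 <= k.+1 <= k.+1)%N by rewrite leqnn.
exact: (chain_mono_gen hm hh hx1).
Qed.

Lemma chain1 a b : is_ideal a -> is_ideal b -> subI a b -> ~ subI b a -> chainI a b 1.
Proof.
move=> ha hb hab hba.
have [x [hx1 hx0]] : exists x, b x /\ ~ a x.
  apply: NNPP => hn; apply: hba => x hx; apply: NNPP => hax; apply: hn; by exists x.
exists (fun i => if i is 0%N then a else b); split => //.
- by case.
- by case=> // _; split => //; exists x.
Qed.

Lemma chain_cat a b d k l : chainI a b k -> chainI b d l -> chainI a d (k + l).
Proof.
move=> [c [c0 ck ci cs]] [c' [c'0 c'l c'i c's]].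
exists (fun i => if (i <= k)%N then c i else c' (i - k)%N); split.
- by rewrite leq0n.
- case: l c'l c'i c's => [|l] c'l c'i c's; first by rewrite addn0 leqnn ck -c'l c'0.
  have -> : (k + l.+1 <= k)%N = false by rewrite -{2}(addn0 k) leq_add2l.
  by rewrite addKn.
- move=> i hi; case: ifP => hik; first exact: ci.
  by apply: c'i; rewrite leq_subLR.
- move=> i hi; case: (ltnP i k) => hik.
  + by rewrite (ltnW hik); apply: cs.
  + case: (leqP i k) => hik2.
    * have -> : i = k by apply/eqP; rewrite eqn_leq hik2.
      rewrite subSnn ck -c'0; apply: c's; move: hi; lia.
    * rewrite subSn //; apply: c's; move: hi; lia.
Qed.

Lemma chain_ext_r a b b' k : chainI a b k -> is_ideal b' -> subI b b' ->
  b' = b \/ chainI a b' k.+1.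
Proof.
move=> h hb' hbb'; case: (classic (subI b' b)) => hb'b.
  by left; apply: subI_antisym.
right; rewrite -addn1; apply: (chain_cat h); apply: chain1 => //; exact: (chain_idr h).
Qed.

Lemma chain_ext_l a a' b k : chainI a b k -> is_ideal a' -> subI a' a ->
  a' = a \/ chainI a' b k.+1.
Proof.
move=> h ha' ha'a; case: (classic (subI a a')) => haa'.
  by left; apply: subI_antisym.
right; rewrite -add1n; apply: (chain_cat _ h); apply: chain1 => //; exact: (chain_idl h).
Qed.

Lemma chain_map_sum lo hi B k : chainI lo hi k -> is_ideal B -> subI (capI hi B) lo ->
  chainI (sumI lo B) (sumI hi B) k.
Proof.
move=> [c [c0 ck ci cs]] hB hcap.
have mono := chain_mono_gen (c:=c) (k:=k) (fun i hh => proj1 (cs i hh)).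
exists (fun i => sumI (c i) B); split; rewrite ?c0 ?ck //.
- by move=> i hi'; apply: sumI_ideal => //; apply: ci.
- move=> i hi'; have [hs [x [hx1 hx0]]] := cs i hi'; split.
    by apply: sumI_mono.
  exists x; split; first by apply: sumI_l => //; exact: hx1.
  move=> [u [w [hu hw ex]]]; apply: hx0.
  have hw' : w = x - u by rewrite ex addrC addKr.
  have hik : is_ideal (c k) by apply: ci.
  have hwhi : hi w.
    rewrite hw' -ck; apply: (idealB hik).
      by apply: (mono i.+1) => //; rewrite hi' leqnn.
    by apply: (mono i) => //; rewrite ltnW // leqnn.
  have hwlo : lo w by apply: hcap; split.
  rewrite ex; apply: (idealD (ci i (ltnW hi'))) => //.
  rewrite -c0 in hwlo; apply: (mono 0%N) hwlo; by rewrite leq0n ltnW.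
Qed.

Lemma chain_map_cap lo hi B k : chainI lo hi k -> is_ideal B -> subI hi (sumI lo B) ->
  chainI (capI lo B) (capI hi B) k.
Proof.
move=> [c [c0 ck ci cs]] hB hsum.
have mono := chain_mono_gen (c:=c) (k:=k) (fun i hh => proj1 (cs i hh)).
exists (fun i => capI (c i) B); split; rewrite ?c0 ?ck //.
- by move=> i hi'; apply: capI_ideal => //; apply: ci.
- move=> i hi'; have [hs [x [hx1 hx0]]] := cs i hi'; split.
    by move=> y [h1 h2]; split => //; apply: hs.
  have hxhi : hi x by rewrite -ck; apply: (mono i.+1) => //; rewrite hi' leqnn.
  have [u [w [hu hw ex]]] := hsum x hxhi.
  have hulo : forall j, (j <= k)%N -> c j u.
    by move=> j hj; rewrite -c0 in hu; apply: (mono 0%N) hu; rewrite leq0n.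
  have hw' : w = x - u by rewrite ex addrC addKr.
  exists w; split.
    split => //; rewrite hw'; apply: (idealB (ci i.+1 hi')) => //; exact: hulo.
  move=> [hwi _]; apply: hx0; rewrite ex; apply: (idealD (ci i (ltnW hi'))) => //.
  by apply: hulo; rewrite ltnW.
Qed.

Lemma sumI_absorb A B : is_ideal A -> is_ideal B -> subI A B -> sumI A B = B.
Proof.
move=> hA hB hAB; apply: subI_antisym; first exact: sumI_min.
exact: sumI_r.
Qed.

Lemma sumI_absorb_l A B : is_ideal A -> is_ideal B -> subI B A -> sumI A B = A.
Proof. by move=> hA hB hBA; rewrite sumIC; apply: sumI_absorb. Qed.

Lemma capI_absorb A B : subI A B -> capI A B = A.
Proof. by move=> h; apply: subI_antisym => [x []|x hx] //; split => //; apply: h. Qed.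

Lemma chain_split a b d k : chainI a d k -> is_ideal b -> subI a b -> subI b d ->
  exists k1 k2, [/\ (k <= k1 + k2)%N, chainI a b k1 & chainI b d k2].
Proof.
elim: k b d => [|k IH] b d.
  move=> hc hb hab hbd; have ead : a = d.
    by case: hc => c [<- <- _ _].
  subst d; have -> : b = a by apply: subI_antisym.
  by exists 0%N, 0%N; split => //; apply: chain0.
move=> [c [c0 ck ci cs]] hb hab hbd.
set x := c k.
have hx : is_ideal x by apply: ci; rewrite ltnW.
have ha : is_ideal a by rewrite -c0; apply: ci.
have hd : is_ideal d by rewrite -ck; apply: ci.
have hca : chainI a x k.
  exists c; split => //.
    by move=> i hi; apply: ci; rewrite ltnW.
  by move=> i hi; apply: cs; rewrite ltnW.
have [hxd [z [hz1 hz0]]] := cs k (ltnSn k).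
rewrite ck -/x in hz1 hxd.
have stepxd : chainI x d 1.
  apply: chain1 => // h; apply: hz0; exact: h.
have hax := chain_sub hca.
have hb' : is_ideal (capI b x) by apply: capI_ideal.
have [k1 [k2 [hk h1 h2]]] := IH (capI b x) x hca hb' (fun y hy => conj (hab y hy) (hax y hy))
  (fun y hy => proj2 hy).
have h2' := chain_map_sum h2 hb (fun y hy => conj (proj2 hy) (proj1 hy)).
rewrite (sumI_absorb hb' hb (fun y hy => proj1 hy)) in h2'.
case: (classic (subI b x)) => hbx.
  rewrite (capI_absorb hbx) in h1.
  rewrite (sumI_absorb_l hx hb hbx) in h2'.
  exists k1, (k2 + 1)%N; split => //; last exact: chain_cat h2' stepxd.
  by rewrite addnA addn1.
have h1' : chainI a b (k1 + 1).
  apply: (chain_cat h1); apply: chain1 => //; first by move=> y [].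
  by move=> h; apply: hbx => y /h [].
have hsd : subI (sumI x b) d by apply: sumI_min.
have hsi : is_ideal (sumI x b) by apply: sumI_ideal.
case: (chain_ext_r h2' hd hsd) => [e|h3].
  rewrite -e in h2'; exists (k1 + 1)%N, k2; split => //.
  by rewrite addn1 addSn ltnS.
exists (k1 + 1)%N, k2.+1; split => //.
by rewrite addn1 addSn ltnS (leq_trans hk) // leq_add2l.
Qed.

End Chains.


Section Finite.
Variable R : comNzRingType.
Implicit Types (A B C K X Y J a b d lo hi m : R -> Prop) (s : seq R).

Definition principal (y : R) : R -> Prop := fun x => exists t, x = t * y.

Lemma principal_ideal y : is_ideal (principal y).
Proof.
split.
- by exists 0; rewrite mul0r.
- by move=> ?? [t ->] [t' ->]; exists (t + t'); rewrite mulrDl.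
- by move=> a ? [t ->]; exists (a * t); rewrite mulrA.
Qed.

Lemma principal_mem y : principal y y. Proof. by exists 1; rewrite mul1r. Qed.

Lemma principal_min y K : is_ideal K -> K y -> subI (principal y) K.
Proof. by move=> hK hy x [t ->]; apply: (idealM hK). Qed.

Lemma maximal_inv m r : maximal_ideal m -> ~ m r ->
  exists u t, m u /\ 1 = u + t * r.
Proof.
move=> [hm hpm hmax] hr.
have hB : is_ideal (sumI m (principal r)) by apply: sumI_ideal => //; exact: principal_ideal.
have hsub : subI m (sumI m (principal r)) by apply: sumI_l; exact: principal_ideal.
case: (classic (sumI m (principal r) 1)) => [[u [v [hu [t ->] e]]]|hn].
  by exists u, t.
exfalso; have := hmax _ hB hsub hn r; case=> h _; apply: hr; apply: h.
by apply: sumI_r => //; exact: principal_mem.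
Qed.

Lemma idspan_cons y s x : idspan (y :: s) x -> exists r w, idspan s w /\ x = r * y + w.
Proof.
move=> [c ->]; rewrite big_ord_recl /=.
exists (c ord0), (\sum_(i < size s) c (lift ord0 i) * s`_i); split => //.
by exists (fun i => c (lift ord0 i)).
Qed.

Lemma idspan_nil (x : R) : idspan [::] x -> x = 0.
Proof. by move=> [c ->]; rewrite big_ord0. Qed.

Lemma chain_le1 a' a k : chainI a' a k ->
  (forall X, is_ideal X -> subI a' X -> subI X a -> ~ subI X a' -> subI a X) ->
  (k <= 1)%N.
Proof.
move=> [c [c0 ck ci cs]] hkey; rewrite leqNgt; apply/negP => hk.
have mono := chain_mono_gen (c:=c) (k:=k) (fun i hh => proj1 (cs i hh)).
have h1 : subI a (c 1%N).
  apply: hkey; first by apply: ci; lia.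
  - by rewrite -c0; apply: mono; lia.
  - by rewrite -ck; apply: mono; lia.
  - have [_ [x [hx1 hx0]]] := cs 0%N ltac:(lia).
    by move=> h; apply: hx0; rewrite c0; apply: h.
have [_ [x [hx1 hx0]]] := cs 1%N ltac:(lia).
apply: hx0; apply: h1; rewrite -ck; apply: (mono 2%N) => //; lia.
Qed.

Lemma vs_bound m s : maximal_ideal m -> forall b a k, is_ideal b -> is_ideal a -> subI b a ->
  (forall i u, (i < size s)%N -> m u -> b (u * s`_i)) ->
  subI a (sumI b (idspan s)) -> chainI b a k -> (k <= size s)%N.
Proof.
move=> hmax; elim: s => [|y s IH] b a k hb ha hba hm has hc.
  suff -> : k = 0%N by [].
  by apply: (chain_back hc) => x /has [u [w [hu /idspan_nil -> ->]]]; rewrite addr0.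
set a' := capI (sumI b (idspan s)) a.
have hsI : is_ideal (sumI b (idspan s)) by apply: sumI_ideal => //; exact: idspan_ideal.
have ha' : is_ideal a' by apply: capI_ideal.
have hba' : subI b a'.
  by move=> x hx; split; [apply: sumI_l => //; exact: idspan_ideal | apply: hba].
have ha'a : subI a' a by move=> x [].
have [k1 [k2 [hk h1 h2]]] := chain_split hc ha' hba' ha'a.
have hk1 : (k1 <= size s)%N.
  apply: (IH b a' k1 hb ha' hba') => //.
  - by move=> i u hi hu; apply: (hm i.+1 u).
  - by move=> x [].
have hk2 : (k2 <= 1)%N.
  apply: (chain_le1 h2) => X hX ha'X hXa hXa'.
  have [z [hzX hza']] : exists z, X z /\ ~ a' z.
    apply: NNPP => hn; apply: hXa' => z hz; apply: NNPP => hz'; apply: hn; by exists z.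
  have hza : a z by apply: hXa.
  have [beta [w0 [hbeta hw0 ez]]] := has z hza.
  have [r [w [hw er]]] := idspan_cons hw0.
  have hmy : forall u, m u -> b (u * y) by move=> u hu; apply: (hm 0%N u).
  have hr : ~ m r.
    move=> hr; apply: hza'; split => //.
    exists (beta + r * y), w; split => //; first by apply: (idealD hb) => //; apply: hmy.
    by rewrite ez er addrA.
  have [u [t [hu e1]]] := maximal_inv hmax hr.
  move=> z2 hz2.
  have [beta2 [w02 [hbeta2 hw02 ez2]]] := has z2 hz2.
  have [r2 [w2 [hw2 er2]]] := idspan_cons hw02.
  have hq : a' (z2 - r2 * t * z).
    split; last by apply: (idealB ha) => //; apply: (idealM ha); apply: hXa.
    exists (beta2 + r2 * (u * y) - r2 * t * beta), (w2 - r2 * t * w); split.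
    - apply: (idealB hb); last by apply: (idealM hb).
      by apply: (idealD hb) => //; apply: (idealM hb); apply: hmy.
    - by apply: (idealB (idspan_ideal s)) => //; apply: (idealM (idspan_ideal s)).
    - rewrite ez2 er2 ez er.
      have -> : u = 1 - t * r by rewrite e1 addrK.
      ring.
  have -> : z2 = (z2 - r2 * t * z) + r2 * t * z by rewrite subrK.
  apply: (idealD hX); first by apply: ha'X.
  by apply: (idealM hX).
by rewrite /=; lia.
Qed.

Lemma pow_chain_bound m : noetherian R -> maximal_ideal m -> forall t,
  exists Bd, forall k, chainI (powI m t) (@fullI R) k -> (k <= Bd)%N.
Proof.
move=> hN hmax; have hm : is_ideal m by case: hmax.
elim=> [|t [Bd IH]].
  by exists 0%N => k hk; rewrite (chain_back hk).
have [s hs] := hN _ (powI_ideal m t).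
have es := eqI_eq hs.
exists (size s + Bd)%N => k hk.
have [k1 [k2 [hk' h1 h2]]] :=
  chain_split hk (powI_ideal m t) (powI_anti1 (n:=t) hm) (fun _ _ => I).
have hk1 : (k1 <= size s)%N.
  apply: (vs_bound (s:=s) hmax (powI_ideal m t.+1) (powI_ideal m t) (powI_anti1 (n:=t) hm) _ _ h1).
  - move=> i u hi hu; rewrite powIS; apply: mulI_gen => //.
    by rewrite es; apply: idspan_mem.
  - move=> x hx; apply: sumI_r; first exact: powI_ideal.
    by rewrite -es.
have := IH _ h2; lia.
Qed.

Lemma pow_sum_sub A B : is_ideal A -> is_ideal B -> forall n p q, (p + q = n)%N ->
  subI (powI (sumI A B) n) (sumI (powI A p) (powI B q)).
Proof.
move=> hA hB; elim=> [|n IH] p q hpq.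
  have -> : p = 0%N by lia.
  move=> x _; exists x, 0; split; rewrite ?addr0 //; apply: ideal0; exact: powI_ideal.
case: p hpq => [|p] hpq.
  move=> x _; exists x, 0; split; rewrite ?addr0 //; apply: ideal0; exact: powI_ideal.
case: q hpq => [|q] hpq.
  move=> x _; exists 0, x; split; rewrite ?add0r //; apply: ideal0; exact: powI_ideal.
have hS : is_ideal (sumI (powI A p.+1) (powI B q.+1)) by apply: sumI_ideal; exact: powI_ideal.
rewrite [powI (sumI A B) _]powIS; apply: (subI_trans (mulI_sumI (X:=powI (sumI A B) n) hA hB)).
apply: sumI_min => //.
- apply: (subI_trans (mulI_mono (fun x (h : A x) => h) (IH p q.+1 ltac:(lia)))).
  apply: mulI_min => // a x ha [u [v [hu hv ->]]].
  rewrite mulrDr; exists (a * u), (a * v); split => //.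
    by rewrite powIS; apply: mulI_gen.
  by apply: (idealM (powI_ideal B q.+1)).
- apply: (subI_trans (mulI_mono (fun x (h : B x) => h) (IH p.+1 q ltac:(lia)))).
  apply: mulI_min => // a x ha [u [v [hu hv ->]]].
  rewrite mulrDr; exists (a * u), (a * v); split => //.
    by apply: (idealM (powI_ideal A p.+1)).
  by rewrite powIS; apply: mulI_gen.
Qed.

Lemma powI_principal y e : subI (powI (principal y) e) (principal (y ^+ e)).
Proof.
elim: e => [|e IH]; first by move=> x _; exists x; rewrite expr0 mulr1.
rewrite powIS; apply: (subI_trans (mulI_mono (fun x (h : principal y x) => h) IH)).
apply: mulI_min; first exact: principal_ideal.
move=> a b [t ->] [t' ->]; exists (t * t'); rewrite exprS; ring.
Qed.

Lemma idspan_cons_sub y s : subI (idspan (y :: s)) (sumI (principal y) (idspan s)).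
Proof.
move=> x /idspan_cons [r [w [hw ->]]]; exists (r * y), w; split => //.
by exists r.
Qed.

Lemma rad_pow J s : is_ideal J -> (forall i, (i < size s)%N -> exists e, J (s`_i ^+ e)) ->
  exists T, subI (powI (idspan s) T) J.
Proof.
move=> hJ; elim: s => [|y s IH] hs.
  exists 1%N; rewrite powIS; apply: (subI_trans (mulI_subl (B:=powI (idspan [::]) 0) (idspan_ideal [::]))).
  by move=> x /idspan_nil ->; apply: ideal0.
have [T hT] := IH (fun i hh => hs i.+1 hh).
have [e he] := hs 0%N isT.
exists (e + T)%N.
refine (subI_trans (powI_monoI (n:=e + T) (idspan_cons_sub (y:=y) (s:=s))) _).
apply: (subI_trans (pow_sum_sub (principal_ideal y) (idspan_ideal s) (erefl _))).
apply: sumI_min => //.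
refine (subI_trans (powI_principal (y:=y) (e:=e)) _); exact: principal_min.
Qed.

Lemma m_pow_J m J : noetherian R -> is_ideal m -> m_primary m J ->
  exists T, forall k, subI (powI m (T * k)) (powI J k).
Proof.
move=> hN hm [hJ hrad].
have [s hs] := hN _ hm; have es := eqI_eq hs.
have er := eqI_eq hrad.
have [T hT] : exists T, subI (powI (idspan s) T) J.
  apply: rad_pow => // i hi.
  have : m s`_i by rewrite es; apply: idspan_mem.
  by rewrite -er.
exists T; elim=> [|k IH]; first by rewrite muln0.
rewrite mulnS powI_add powIS; apply: mulI_mono => //.
by rewrite es.
Qed.

Lemma chain_of_length_iff K n : is_ideal K -> chain_of_length K n <-> chainI K (@fullI R) n.
Proof.
move=> hK; split.
- move=> [c [c0 cn cs]]; exists c; split.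
  + exact: eqI_eq.
  + exact: eqI_eq.
  + move=> i; rewrite leq_eqVlt => /orP [/eqP ->|hi]; first by rewrite (eqI_eq cn).
    by case: (cs i hi).
  + by move=> i hi; case: (cs i hi).
- move=> [c [c0 cn ci cs]]; exists c; split; first by rewrite c0.
  + by rewrite cn.
  + by move=> i hi; have [h1 h2] := cs i hi; split => //; apply: ci; rewrite ltnW.
Qed.

Lemma max_exists (P : nat -> Prop) l0 Bd : P l0 -> (forall l, P l -> (l <= Bd)%N) ->
  exists n, P n /\ forall l, P l -> (l <= n)%N.
Proof.
move=> hl0 hB; apply: NNPP => hn.
have H : forall n, P n -> exists l, P l /\ (n < l)%N.
  move=> n pn; apply: NNPP => hn2; apply: hn; exists n; split => // l pl.
  rewrite leqNgt; apply/negP => hlt; apply: hn2; by exists l.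
have : forall j, exists l, P l /\ (j <= l)%N.
  elim=> [|j [l [pl hjl]]]; first by exists l0.
  have [l' [pl' hll']] := H l pl; exists l'; split => //; lia.
move=> /(_ Bd.+1) [l [pl hl]]; have := hB l pl; lia.
Qed.

Lemma finite_length m J K k : noetherian R -> maximal_ideal m -> m_primary m J ->
  is_ideal K -> subI (powI J k) K -> exists n, length_is K n.
Proof.
move=> hN hmax hprim hK hJK; have hm : is_ideal m by case: hmax.
have [T hT] := m_pow_J hN hm hprim.
have [Bd hB] := pow_chain_bound hN hmax (T * k).
have hsub : subI (powI m (T * k)) K := subI_trans (hT k) hJK.
have bnd : forall l, chainI K (@fullI R) l -> (l <= Bd)%N.
  move=> l hl; case: (chain_ext_l hl (powI_ideal m (T * k)) hsub) => [e|h].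
    by apply: hB; rewrite e.
  by have := hB _ h; lia.
have [l0 hl0] : exists l0, chainI K (@fullI R) l0.
  case: (chain_ext_r (chain0 hK) (@full_ideal R) (fun _ _ => I)) => [e|h].
    by exists 0%N; rewrite e; apply: chain0.
  by exists 1%N.
have [n [pn hn]] := max_exists hl0 bnd.
exists n; split; first by apply/chain_of_length_iff.
by move=> l /(chain_of_length_iff _ hK) /hn.
Qed.

End Finite.


Section Main.
Variable R : comNzRingType.
Variables (J : R -> Prop) (f f' : seq R) (N : nat).
Hypothesis hJ : is_ideal J.
Hypothesis hsz : size f' = size f.
Hypothesis hdiff : forall i, (i < size f)%N -> powI J N (f'`_i - f`_i).

Lemma pert x : idspan f x -> exists x', idspan f' x' /\ powI J N (x - x').
Proof.
move=> [c ->]; exists (\sum_(i < size f) c i * f'`_i); split.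
  apply: (big_ind (idspan f')); first exact: (ideal0 (idspan_ideal f')).
  - by move=> ??; apply: (idealD (idspan_ideal f')).
  - move=> i _; apply: (idealM (idspan_ideal f')); apply: idspan_mem.
    by rewrite hsz.
rewrite -sumrB; apply: (big_ind (powI J N)); first exact: (ideal0 (powI_ideal J N)).
- by move=> ??; apply: (idealD (powI_ideal J N)).
- move=> i _; rewrite -mulrBr; apply: (idealM (powI_ideal J N)).
  rewrite -opprB; apply: (idealN (powI_ideal J N)); exact: hdiff.
Qed.

Lemma pert' x : idspan f' x -> exists x0, idspan f x0 /\ powI J N (x - x0).
Proof.
move=> [c ->]; exists (\sum_(i < size f') c i * f`_i); split.
  apply: (big_ind (idspan f)); first exact: (ideal0 (idspan_ideal f)).
  - by move=> ??; apply: (idealD (idspan_ideal f)).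
  - move=> i _; apply: (idealM (idspan_ideal f)); apply: idspan_mem.
    by rewrite -hsz.
rewrite -sumrB; apply: (big_ind (powI J N)); first exact: (ideal0 (powI_ideal J N)).
- by move=> ??; apply: (idealD (powI_ideal J N)).
- move=> i _; rewrite -mulrBr; apply: (idealM (powI_ideal J N)).
  apply: hdiff; rewrite -hsz; exact: ltn_ord.
Qed.

Lemma I_sub k : (k <= N)%N -> subI (idspan f) (sumI (powI J k) (idspan f')).
Proof.
move=> hk x hx; have [x' [h1 h2]] := pert hx.
exists (x - x'), x'; split => //; last by rewrite subrK.
exact: (powI_anti hJ hk).
Qed.

Lemma I'_sub k : (k <= N)%N -> subI (idspan f') (sumI (powI J k) (idspan f)).
Proof.
move=> hk x hx; have [x' [h1 h2]] := pert' hx.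
exists (x - x'), x'; split => //; last by rewrite subrK.
exact: (powI_anti hJ hk).
Qed.

Lemma forward c n : AR_ok J (idspan f) c -> (c < N)%N ->
  subI (capI (powI J n) (idspan f)) (sumI (powI J n.+1) (idspan f')).
Proof.
move=> har hcN; case: (ltnP n N) => hn.
  by move=> x [_ hx]; apply: I_sub.
have hcn : (c <= n)%N by lia.
rewrite (eqI_eq (har n hcn)).
have hS : is_ideal (sumI (powI J n.+1) (idspan f')).
  by apply: sumI_ideal; [exact: powI_ideal| exact: idspan_ideal].
apply: mulI_min => // a b ha [hbc hbI].
have [j [i' [hj hi' ->]]] := I_sub (k:=c.+1) hcN hbI.
rewrite mulrDr; exists (a * j), (a * i'); split => //.
  have -> : n.+1 = ((n - c) + c.+1)%N by lia.
  exact: powI_mul.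
exact: (idealM (idspan_ideal f')).
Qed.

Lemma transfer n A B d : is_ideal A -> is_ideal B ->
  subI (capI (powI J n) A) (sumI (powI J n.+1) B) ->
  powI J n d -> sumI (powI J n.+1) A d -> sumI (powI J n.+1) B d.
Proof.
move=> hA hB H hd [j [a [hj ha e]]]; subst d.
have : capI (powI J n) A a.
  split => //; have -> : a = (j + a) - j by rewrite [j + a]addrC addrK.
  apply: (idealB (powI_ideal J n)) => //; exact: (powI_anti1 hJ hj).
move=> /H [j2 [b [hj2 hb ->]]]; exists (j + j2), b; split => //.
  exact: (idealD (powI_ideal J n.+1)).
by rewrite addrA.
Qed.

Lemma backward m p c n : noetherian R -> maximal_ideal m -> m_primary m J ->
  perturbation_ok J f p -> (p <= N)%N -> AR_ok J (idspan f) c -> (c < N)%N ->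
  subI (capI (powI J n) (idspan f')) (sumI (powI J n.+1) (idspan f)).
Proof.
move=> hN hmax hprim hpert hpN har hcN x [hxn hxI'].
apply: NNPP => hnx.
have hI := idspan_ideal f; have hI' := idspan_ideal f'.
pose A k := sumI (idspan f) (powI J k).
pose B k := sumI (idspan f') (powI J k).
have hAk : forall k, is_ideal (A k) by move=> k; apply: sumI_ideal => //; exact: powI_ideal.
have hBk : forall k, is_ideal (B k) by move=> k; apply: sumI_ideal => //; exact: powI_ideal.
have hsame : forall k, same_length (A k) (B k).
  by apply: hpert => // i hi; apply: (powI_anti hJ hpN); apply: hdiff.
have [a [hac hamax]] := finite_length hN hmax hprim (hAk n.+1)
  (sumI_r (B:=powI J n.+1) hI).
have [a0 [ha0c ha0max]] := finite_length hN hmax hprim (hAk n)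
  (sumI_r (B:=powI J n) hI).
have [hbc hbmax] := (hsame n.+1 a).1 (conj hac hamax).
have [hb0c hb0max] := (hsame n a0).1 (conj ha0c ha0max).
have hbc' := (chain_of_length_iff _ (hBk n.+1)).1 hbc.
have hBB : subI (B n.+1) (B n) by apply: sumI_mono => //; exact: powI_anti1.
have [k1 [k2 [hk h1 h2]]] := chain_split hbc' (hBk n) hBB (fun _ _ => I).
have hk2 : (k2 <= a0)%N by apply: hb0max; apply/(chain_of_length_iff _ (hBk n)).
have hcond : subI (B n) (sumI (B n.+1) (powI J n)).
  move=> y [i' [j [hi' hj ->]]]; exists i', j; split => //.
  apply: sumI_l => //; exact: powI_ideal.
have h1' := chain_map_cap h1 (powI_ideal J n) hcond.
have eBn : capI (B n) (powI J n) = powI J n.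
  apply: subI_antisym => [y [] //|y hy]; split => //.
  by apply: sumI_r.
rewrite eBn in h1'.
pose L := capI (A n.+1) (powI J n).
pose L' := capI (B n.+1) (powI J n).
have hL : is_ideal L by apply: capI_ideal => //; exact: powI_ideal.
have hL' : is_ideal L' by apply: capI_ideal => //; exact: powI_ideal.
have hfw := forward (n:=n) har hcN.
have hLL' : subI L L'.
  move=> y [[i [j [hi hj e]]] hyn]; split => //.
  have hin : capI (powI J n) (idspan f) i.
    split => //; have -> : i = y - j by rewrite e addrK.
    apply: (idealB (powI_ideal J n)) => //; exact: (powI_anti1 hJ hj).
  have [j2 [i2 [hj2 hi2 e2]]] := hfw i hin.
  exists i2, (j + j2); split => //.
    exact: (idealD (powI_ideal J n.+1)).
  by rewrite e e2; ring.
have hstep : chainI L L' 1.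
  apply: chain1 => // h.
  have hxL' : L' x.
    split => //; exists x, 0; split => //; rewrite ?addr0 //.
    exact (ideal0 (powI_ideal J n.+1)).
  have [[i [j [hi hj e]]] _] := h x hxL'.
  by apply: hnx; exists j, i; split => //; rewrite e addrC.
have hc := chain_cat hstep h1'.
have hcap : subI (capI (powI J n) (idspan f)) L.
  move=> y [hyn hyI]; split => //; exists y, 0; split; rewrite ?addr0 //.
  exact (ideal0 (powI_ideal J n.+1)).
have hc2 := chain_map_sum hc hI hcap.
have eL : sumI L (idspan f) = A n.+1.
  apply: subI_antisym.
    by apply: sumI_min => // [y [] //|]; apply: sumI_l; exact: powI_ideal.
  move=> y [i [j [hi hj ->]]]; exists j, i; split => //; last by rewrite addrC.
  split; last exact: (powI_anti1 hJ hj).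
  by apply: sumI_r.
have eJ : sumI (powI J n) (idspan f) = A n by rewrite sumIC.
rewrite eL eJ in hc2.
have hc3 := chain_cat hc2 ((chain_of_length_iff _ (hAk n)).1 ha0c).
have := hamax _ ((chain_of_length_iff _ (hAk n.+1)).2 hc3).
lia.
Qed.

Lemma shift (X K : R -> Prop) (d e : R) : is_ideal X -> is_ideal K -> K e ->
  (sumI X K (d + e) <-> sumI X K d).
Proof.
move=> hX hK he; have hS := sumI_ideal hX hK.
have hse : sumI X K e by apply: sumI_r.
split => h.
  by have := idealB hS h hse; rewrite addrK.
exact (idealD hS h hse).
Qed.

Lemma gr_iso_of :
  (forall n, subI (capI (powI J n) (idspan f)) (sumI (powI J n.+1) (idspan f'))) ->
  (forall n, subI (capI (powI J n) (idspan f')) (sumI (powI J n.+1) (idspan f))) ->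
  gr_iso J (idspan f) (idspan f').
Proof.
move=> fw bw.
have hI := idspan_ideal f; have hI' := idspan_ideal f'.
pose phi n x := epsilon (inhabits (0:R)) (fun a => powI J n a /\ idspan f (x - a)).
have phiP : forall n x, sumI (powI J n) (idspan f) x ->
    powI J n (phi n x) /\ idspan f (x - phi n x).
  move=> n x [a [b [ha hb e]]]; rewrite /phi.
  apply: (epsilon_spec (inhabits (0:R)) (fun a => powI J n a /\ idspan f (x - a))).
  exists a; split => //.
  by rewrite e [a + b]addrC addrK.
have K1 : forall n d, powI J n d -> idspan f d -> sumI (powI J n.+1) (idspan f') d.
  by move=> n d hd hid; apply: fw.
have Kf : forall n d, powI J n d ->
    (sumI (powI J n.+1) (idspan f) d <-> sumI (powI J n.+1) (idspan f') d).
  move=> n d hd; split; apply: transfer => //.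
exists phi; split.
- move=> n x hx; exists (phi n x), 0; split; rewrite ?addr0 //.
    exact: (phiP n x hx).1.
  exact (ideal0 hI').
- move=> n x y hx hy.
  have [px ix] := phiP n x hx; have [py iy] := phiP n y hy.
  have -> : x - y = (phi n x - phi n y) + ((x - phi n x) - (y - phi n y)) by ring.
  rewrite shift //; [|exact: powI_ideal|exact (idealB hI ix iy)].
  apply: Kf; exact (idealB (powI_ideal J n) px py).
- move=> n z [j [i' [hj hi' ez]]].
  have hxj : sumI (powI J n) (idspan f) j.
    by exists j, 0; split; rewrite ?addr0 //; exact (ideal0 hI).
  exists j; split => //.
  have [pj ij] := phiP n j hxj.
  have -> : phi n j - z = (phi n j - j) + (- i') by rewrite ez; ring.
  rewrite shift //; [|exact: powI_ideal|exact (idealN hI' hi')].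
  apply: K1; first exact (idealB (powI_ideal J n) pj hj).
  by rewrite -opprB; exact (idealN hI ij).
- split.
  + move=> n x y hx hy.
    have [px ix] := phiP n x hx; have [py iy] := phiP n y hy.
    have hxy : sumI (powI J n) (idspan f) (x + y).
      exact (idealD (sumI_ideal (powI_ideal J n) hI) hx hy).
    have [pxy ixy] := phiP n _ hxy.
    apply: K1.
      exact (idealB (powI_ideal J n) pxy (idealD (powI_ideal J n) px py)).
    have -> : phi n (x + y) - (phi n x + phi n y) =
      - ((x + y - phi n (x + y)) - (x - phi n x) - (y - phi n y)) by ring.
    exact (idealN hI (idealB hI (idealB hI ixy ix) iy)).
  + move=> k n x y hx hy.
    have [px ix] := phiP k x hx; have [py iy] := phiP n y hy.
    have hxy : sumI (powI J (k + n)) (idspan f) (x * y).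
      exists (phi k x * phi n y), (x * y - phi k x * phi n y); split.
      * exact: powI_mul.
      * have -> : x * y - phi k x * phi n y =
          (x - phi k x) * y + phi k x * (y - phi n y) by ring.
        exact (idealD hI (idealMr hI _ ix) (idealM hI _ iy)).
      * by rewrite addrC subrK.
    have [pxy ixy] := phiP _ _ hxy.
    apply: K1; first exact (idealB (powI_ideal J (k + n)) pxy (powI_mul px py)).
    have -> : phi (k + n)%N (x * y) - phi k x * phi n y =
      (x * y - phi k x * phi n y) - (x * y - phi (k + n)%N (x * y)) by ring.
    apply: (idealB hI _ ixy).
    have -> : x * y - phi k x * phi n y =
      (x - phi k x) * y + phi k x * (y - phi n y) by ring.
    exact (idealD hI (idealMr hI _ ix) (idealM hI _ iy)).
- have h1 : sumI (powI J 0) (idspan f) 1.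
    by exists 1, 0; split; rewrite ?addr0 //; exact (ideal0 hI).
  have [p01 i01] := phiP 0%N 1 h1.
  apply: K1 => //; by rewrite -opprB; exact (idealN hI i01).
Qed.

End Main.

Theorem main_thm (R : comNzRingType) (m J : R -> Prop) (f : seq R)
    (p c N : nat) :
  noetherian R -> local_ring m -> m_primary m J -> filter_regular m f ->
  hilbert_perturbation_index J f p -> ar_index J (idspan f) c ->
  N = maxn p c.+1 ->
  forall f' : seq R, size f' = size f ->
    (forall i, (i < size f)%N -> powI J N (f'`_i - f`_i)) ->
    gr_iso J (idspan f) (idspan f').
Proof.
move=> hN [hmax _] hprim _ [hpert _] [har _] eN f' hsz hdiff.
have hJ : is_ideal J by case: hprim.
have hpN : (p <= N)%N by rewrite eN leq_maxl.
have hcN : (c < N)%N by rewrite eN leq_maxr.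
apply: (gr_iso_of (f:=f) (f':=f') hJ).
- move=> n; exact: (forward hJ hsz hdiff (n:=n) har hcN).
- move=> n; exact: (backward hJ hsz hdiff (n:=n) hN hmax hprim hpert hpN har hcN).
Qed.


Unset Implicit Arguments.

Theorem proposition4p7 (R : comNzRingType) (m J : R -> Prop) (f : seq R)
    (p c N : nat) :
  noetherian R -> local_ring m -> m_primary m J -> filter_regular m f ->
  hilbert_perturbation_index J f p -> ar_index J (idspan f) c ->
  N = maxn p c.+1 ->
  forall f' : seq R, size f' = size f ->
    (forall i, (i < size f)%N -> powI J N (f'`_i - f`_i)) ->
    gr_iso J (idspan f) (idspan f').
Proof. exact: main_thm. Qed.
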